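(* The categories $\mathsf{DeV^F}$ and $\mathsf{DeV}$ are dually isomorphic via the following contravariant functors, both the identity on objects: a morphism $S\colon A\to B$ of $\mathsf{DeV^F}$ is sent to $f_S\colon B\to A$, $f_S(b)=\bigvee\{a\in A\mid a\mathrel{S}b\}$; a de Vries morphism $f\colon A\to B$ is sent to $S_f\colon B\to A$, where $b\mathrel{S_f}a$ iff there is $a'\in A$ with $a'\prec a$ and $b\le f(a')$. These assignments are well-defined contravariant functors, and $S_{f_S}=S$ and $f_{S_f}=f$ for all morphisms $S$ of $\mathsf{DeV^F}$ and $f$ of $\mathsf{DeV}$.
   Context: A de Vries algebra is a pair $(B,\prec)$ with $B$ a complete boolean algebra and $\prec\subseteq B\times B$ satisfying (S1) $0\prec0$, $1\prec1$; (S2) $a,b\prec c\Rightarrow(a\vee b)\prec c$; (S3) $a\prec c,d\Rightarrow a\prec(c\wedge d)$; (S4) $a\le b\prec c\le d\Rightarrow a\prec d$; (S5) $a\prec b\Rightarrow a\le b$; (S6) $a\prec b\Rightarrow\neg b\prec\neg a$; (S7) $a\prec b\Rightarrow\exists c\,(a\prec c\prec b)$; (S8) $a\ne0\Rightarrow\exists b\ne0,\ b\prec a$. $\mathsf{DeV^F}$: objects de Vries algebras; morphisms $(A,\prec_A)\to(B,\prec_B)$ are relations $S\subseteq A\times B$ satisfying (S1)–(S4) (with $S$ in place of $\prec$), $S\circ\prec_A=S=\prec_B\circ S$, and additionally (F1) $a\mathrel{S}0\Rightarrow a=0$; (F2) whenever $b_1\prec_B b_2$ there is $a\in A$ with $\neg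 a\mathrel{S}\neg b_1$ and $a\mathrel{S}b_2$. Identity on $(A,\prec)$ is $\prec$; composition is relational ($a\mathrel{(S_2\circ S_1)}c$ iff $\exists b$, $a\mathrel{S_1}b\mathrel{S_2}c$). $\mathsf{DeV}$: objects de Vries algebras; morphisms (de Vries morphisms) are functions $f\colon A\to B$ with (M1) $f(0)=0$; (M2) $f(a\wedge b)=f(a)\wedge f(b)$; (M3) $a\prec b$ implies $\neg f(\neg a)\prec f(b)$; (M4) $f(a)=\bigvee\{f(b)\mid b\prec a\}$. Identities are identity functions and the composite of $f\colon A\to B$ and $g\colon B\to C$ is $(g*f)(a)=\bigvee\{g(f(b))\mid b\prec a\}$. *)

(* Defs.v *)
(* boolean algebras are mathcomp's ctbDistrLatticeType
   (complemented distributive lattices with top and bottom). *)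
From HB Require Import structures.
From mathcomp Require Import all_boot all_order.
From Stdlib Require Import ClassicalEpsilon.
Import Order.Theory.

Set Implicit Arguments.
Unset Strict Implicit.
Unset Printing Implicit Defensive.

Local Open Scope order_scope.

Section Defs.
Context {d : Order.disp_t} {T : ctbDistrLatticeType d}.

Definition is_sup (P : T -> Prop) (s : T) : Prop :=
  (forall x, P x -> x <= s) /\ (forall u, (forall x, P x -> x <= u) -> s <= u).

Definition complete_lattice : Prop := forall P : T -> Prop, exists s, is_sup P s.

(** the join \bigvee P (it is the supremum whenever T is complete) *)
Definition bigvee (P : T -> Prop) : T :=
  epsilon (inhabits (\bot : T)) (is_sup P).

(** de Vries algebra axioms (S1)-(S8), plus completeness of B *)
Definition is_deVries (prec : T -> T -> Prop) : Prop :=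
  complete_lattice /\
  (prec \bot \bot /\ prec \top \top) /\
  (forall a b c, prec a c -> prec b c -> prec (a `|` b) c) /\
  (forall a c e, prec a c -> prec a e -> prec a (c `&` e)) /\
  (forall a b c e, a <= b -> prec b c -> c <= e -> prec a e) /\
  (forall a b, prec a b -> a <= b) /\
  (forall a b, prec a b -> prec (~` b) (~` a)) /\
  (forall a b, prec a b -> exists c, prec a c /\ prec c b) /\
  (forall a, a != \bot -> exists b, b != \bot /\ prec b a).
End Defs.

(** relational composition: a (S2 o S1) c iff exists b, a S1 b S2 c *)
Definition relcomp {X Y Z : Type}
  (S1 : X -> Y -> Prop) (S2 : Y -> Z -> Prop) : X -> Z -> Prop :=
  fun a c => exists b, S1 a b /\ S2 b c.

Section Morphisms.
Context {dA : Order.disp_t} {A : ctbDistrLatticeType dA}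
        {dB : Order.disp_t} {B : ctbDistrLatticeType dB}.

Definition rel_S1_S4 (S : A -> B -> Prop) : Prop :=
  [/\ S \bot \bot /\ S \top \top,
      (forall a b c, S a c -> S b c -> S (a `|` b) c),
      (forall a c e, S a c -> S a e -> S a (c `&` e)) &
      (forall a b c e, a <= b -> S b c -> c <= e -> S a e)].

Definition DeVF_morphism (precA : A -> A -> Prop) (precB : B -> B -> Prop)
  (S : A -> B -> Prop) : Prop :=
  [/\ rel_S1_S4 S,
      (forall a b, relcomp precA S a b <-> S a b),
      (forall a b, relcomp S precB a b <-> S a b),
      (forall a, S a \bot -> a = \bot) &
      (forall b1 b2, precB b1 b2 -> exists a, S (~` a) (~` b1) /\ S a b2)].

Definition DeV_morphism (precA : A -> A -> Prop) (precB : B -> B -> Prop)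
  (f : A -> B) : Prop :=
  [/\ f \bot = \bot,
      (forall a b, f (a `&` b) = f a `&` f b),
      (forall a b, precA a b -> precB (~` (f (~` a))) (f b)) &
      (forall a, f a = bigvee (fun y => exists b, precA b a /\ y = f b))].

Definition f_of (S : A -> B -> Prop) : B -> A :=
  fun b => bigvee (fun a => S a b).

Definition S_of (precA : A -> A -> Prop) (f : A -> B) : B -> A -> Prop :=
  fun b a => exists a', precA a' a /\ b <= f a'.
End Morphisms.

Definition dev_comp {dA dB dC : Order.disp_t} {A : ctbDistrLatticeType dA}
  {B : ctbDistrLatticeType dB} {C : ctbDistrLatticeType dC}
  (precA : A -> A -> Prop) (f : A -> B) (g : B -> C) : A -> C :=
  fun a => bigvee (fun y => exists b, precA b a /\ y = g (f b)).

(* Main.v *)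
Require Import Defs.
From HB Require Import structures.
From mathcomp Require Import all_boot all_order.
From Stdlib Require Import ClassicalEpsilon.
Import Order.Theory.
Local Open Scope order_scope.

Set Implicit Arguments.
Unset Strict Implicit.

Section Lat.
Context {d : Order.disp_t} {T : ctbDistrLatticeType d}.
Implicit Types (x y z : T) (P Q : T -> Prop).

Lemma bigvee_is_sup (hc : @complete_lattice _ T) P : is_sup P (bigvee P).
Proof. rewrite /bigvee; apply: epsilon_spec; exact: hc. Qed.

Lemma le_bigvee (hc : @complete_lattice _ T) P x : P x -> x <= bigvee P.
Proof. by case: (bigvee_is_sup hc P) => h _; apply: h. Qed.

Lemma bigvee_le (hc : @complete_lattice _ T) P u :
  (forall x, P x -> x <= u) -> bigvee P <= u.
Proof. by case: (bigvee_is_sup hc P) => _ h; apply: h. Qed.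

Lemma bigvee_eq (hc : @complete_lattice _ T) P Q :
  (forall x, P x -> x <= bigvee Q) -> (forall x, Q x -> x <= bigvee P) ->
  bigvee P = bigvee Q.
Proof.
move=> h1 h2; apply: le_anti; apply/andP; split; exact: (bigvee_le hc).
Qed.

Lemma meet_le_join_compl x p t : p `&` x <= t -> p <= t `|` ~` x.
Proof.
move=> h; rewrite -[p]meetx1 -(joinxC x) meetUr.
by apply: leU2 => //; apply: leIr.
Qed.

Lemma meet_bigvee_le (hc : @complete_lattice _ T) P x t :
  (forall p, P p -> x `&` p <= t) -> x `&` bigvee P <= t.
Proof.
move=> h.
have hs : bigvee P <= t `|` ~` x.
  apply: (bigvee_le hc) => p Pp; apply: meet_le_join_compl; rewrite meetC; exact: h.
apply: le_trans (leI2 (lexx x) hs) _.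
by rewrite meetUr meetxC joinx0 leIr.
Qed.

Lemma disj_le x y : x `&` y = \bot -> x <= ~` y.
Proof. by move=> h; rewrite -disj_leC h. Qed.

Lemma le_of_disj x y : x `&` ~` y = \bot -> x <= y.
Proof. by move=> h; rewrite -[y]complK -disj_leC h. Qed.

End Lat.

Section DV.
Context {d : Order.disp_t} {T : ctbDistrLatticeType d} (prec : T -> T -> Prop)
  (H : is_deVries prec).

Lemma dv_c : @complete_lattice _ T. Proof. by case: H. Qed.
Lemma dv_1b : prec \bot \bot. Proof. by case: H => _ [[]]. Qed.
Lemma dv_1t : prec \top \top. Proof. by case: H => _ [[]]. Qed.
Lemma dv_2 a b c : prec a c -> prec b c -> prec (a `|` b) c.
Proof. by case: H => _ [_ [h _]]; apply: h. Qed.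
Lemma dv_3 a c e : prec a c -> prec a e -> prec a (c `&` e).
Proof. by case: H => _ [_ [_ [h _]]]; apply: h. Qed.
Lemma dv_4 a b c e : a <= b -> prec b c -> c <= e -> prec a e.
Proof. by case: H => _ [_ [_ [_ [h _]]]]; apply: h. Qed.
Lemma dv_5 a b : prec a b -> a <= b.
Proof. by case: H => _ [_ [_ [_ [_ [h _]]]]]; apply: h. Qed.
Lemma dv_6 a b : prec a b -> prec (~` b) (~` a).
Proof. by case: H => _ [_ [_ [_ [_ [_ [h _]]]]]]; apply: h. Qed.
Lemma dv_7 a b : prec a b -> exists c, prec a c /\ prec c b.
Proof. by case: H => _ [_ [_ [_ [_ [_ [_ [h _]]]]]]]; apply: h. Qed.
Lemma dv_8 a : a != \bot -> exists b, b != \bot /\ prec b a.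
Proof. by case: H => _ [_ [_ [_ [_ [_ [_ [_ h]]]]]]]; apply: h. Qed.

Lemma prec_sup a : bigvee (fun x => prec x a) = a.
Proof.
set s := bigvee _.
have hs : s <= a by apply: (bigvee_le dv_c) => x hx; apply: dv_5.
apply: le_anti; rewrite hs /=.
case: (eqVneq (a `&` ~` s) \bot) => [/le_of_disj //| hne].
case: (dv_8 hne) => b [bne hb].
have hba : prec b a := dv_4 (lexx b) hb (leIl _ _).
have h1 : b <= s := le_bigvee dv_c hba.
have h2 : b <= ~` s := le_trans (dv_5 hb) (leIr _ _).
have : b <= s `&` ~` s by rewrite lexI h1 h2.
by rewrite meetxC lex0 (negbTE bne).
Qed.
End DV.

Section FOf.
Context {dA : Order.disp_t} {A : ctbDistrLatticeType dA}
        {dB : Order.disp_t} {B : ctbDistrLatticeType dB}.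

Lemma le_f_of (hc : @complete_lattice _ A) (S : A -> B -> Prop) a b :
  S a b -> a <= f_of S b.
Proof. exact: le_bigvee. Qed.

Lemma f_of_le (hc : @complete_lattice _ A) (S : A -> B -> Prop) b u :
  (forall a, S a b -> a <= u) -> f_of S b <= u.
Proof. exact: bigvee_le. Qed.

Lemma mono_f (f : A -> B) : (forall a b, f (a `&` b) = f a `&` f b) ->
  forall x y, x <= y -> f x <= f y.
Proof. by move=> hM x y /meet_idPl <-; rewrite hM leIr. Qed.
End FOf.

Section Mor.
Context {dA : Order.disp_t} {A : ctbDistrLatticeType dA} (precA : A -> A -> Prop)
        {dB : Order.disp_t} {B : ctbDistrLatticeType dB} (precB : B -> B -> Prop)
        (hA : is_deVries precA) (hB : is_deVries precB).

Lemma fS_rel (S : A -> B -> Prop) : DeVF_morphism precA precB S ->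
  forall b' b, precB b' b -> S (f_of S b') b.
Proof.
case=> [[[S10 S11] S2 S3 S4] hcA hcB F1 F2] b' b hb.
case: (F2 _ _ hb) => a0 [h1 h2].
apply: (S4 _ a0 _ b) => //.
apply: (f_of_le (dv_c hA)) => x hx; apply: le_of_disj; apply: F1.
rewrite -(meetxC b'); apply: S3.
- exact: (S4 _ x _ _ (leIl _ _) hx).
- exact: (S4 _ (~` a0) _ _ (leIr _ _) h1).
- exact: h2.
Qed.

Lemma part1 (S : A -> B -> Prop) : DeVF_morphism precA precB S ->
  DeV_morphism precB precA (f_of S).
Proof.
move=> hS; have hrel := fS_rel hS.
case: hS => [[[S10 S11] S2 S3 S4] hcA hcB F1 F2].
have cA := dv_c hA; have cB := dv_c hB.
split.
- apply: le_anti; rewrite le0x andbT; apply: (f_of_le cA) => x hx.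
  by rewrite (F1 _ hx).
- move=> b b'; apply: le_anti; apply/andP; split.
    apply: (f_of_le cA) => x hx; rewrite lexI; apply/andP; split;
    apply: (le_f_of cA); apply: (S4 x x _ _ (lexx x) hx); [exact: leIl | exact: leIr].
  apply: (meet_bigvee_le cA) => p Sp; rewrite meetC.
  apply: (meet_bigvee_le cA) => q Sq; apply: (le_f_of cA).
  apply: S3; [exact: (S4 _ _ _ _ (leIr _ _) Sq) | exact: (S4 _ _ _ _ (leIl _ _) Sp)].
- move=> b b' hbb; case: (F2 _ _ hbb) => a [h1 h2].
  case: ((hcA a b').2 h2) => x [hax hxb'].
  apply: (dv_4 hA _ hax); last exact: (le_f_of cA hxb').
  by rewrite leCx; apply: (le_f_of cA).
- move=> b; apply: (bigvee_eq cA).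
    move=> x hx; case: ((hcB x b).2 hx) => y [hxy hyb].
    apply: le_trans (le_f_of cA hxy) _.
    by apply: (le_bigvee cA); exists y.
  move=> y [b0 [hb0 ->]]; apply: (f_of_le cA) => x hx.
  apply: (le_f_of cA); exact: (S4 _ _ _ _ (lexx x) hx (dv_5 hB hb0)).
Qed.

Lemma f_top (f : A -> B) : DeV_morphism precA precB f -> f \top = \top.
Proof.
case=> M1 M2 M3 M4; apply/eqP; rewrite -le1x.
have := M3 _ _ (dv_1t hA); rewrite compl1 M1 compl0 => h; exact: (dv_5 hB h).
Qed.

Lemma f_disj (f : A -> B) : DeV_morphism precA precB f -> forall a, f a <= ~` f (~` a).
Proof. case=> M1 M2 M3 M4 a; by apply: disj_le; rewrite -M2 meetxC M1. Qed.

Lemma part4 (f : A -> B) : DeV_morphism precA precB f ->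
  DeVF_morphism precB precA (S_of precA f).
Proof.
move=> hf; have ft := f_top hf; have fd := f_disj hf.
case: hf => M1 M2 M3 M4; have mono := mono_f M2.
split.
- split.
  + split; [exists \bot | exists \top]; split; rewrite ?le0x ?ft ?lexx //.
      exact: (dv_1b hA).
    exact: (dv_1t hA).
  + move=> b b' c [a1 [h1 l1]] [a2 [h2 l2]]; exists (a1 `|` a2); split.
      exact: (dv_2 hA h1 h2).
    rewrite leUx; apply/andP; split.
      by apply: le_trans l1 _; apply: mono; apply: leUl.
    by apply: le_trans l2 _; apply: mono; apply: leUr.
  + move=> b c e [a1 [h1 l1]] [a2 [h2 l2]]; exists (a1 `&` a2); split.
      exact: (dv_3 hA (dv_4 hA (leIl _ _) h1 (lexx _)) (dv_4 hA (leIr _ _) h2 (lexx _))).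
    by rewrite M2 lexI l1 l2.
  + move=> a b c e hab [a' [h l]] hce; exists a'; split.
      exact: (dv_4 hA (lexx _) h hce).
    exact: le_trans hab l.
- move=> b a; split.
    move=> [y [hby [a' [h l]]]]; exists a'; split => //.
    exact: le_trans (dv_5 hB hby) l.
  move=> [a' [h l]]; case: (dv_7 hA h) => a'' [h1 h2].
  exists (f a''); split; last by exists a''.
  exact: (dv_4 hB (le_trans l (fd a')) (M3 _ _ h1) (lexx _)).
- move=> b a; split.
    move=> [y [[a' [h l]] hya]]; exists a'; split => //.
    exact: (dv_4 hA (lexx _) h (dv_5 hA hya)).
  move=> [a' [h l]]; case: (dv_7 hA h) => c [h1 h2].
  by exists c; split => //; exists a'.
- move=> b [a' [h l]].
  have ha : a' = \bot by apply/eqP; rewrite -lex0; exact: (dv_5 hA h).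
  by apply/eqP; rewrite -lex0 -M1 -ha.
- move=> a1 a2 h; case: (dv_7 hA h) => c [h1 h2].
  case: (dv_7 hA (dv_6 hA h1)) => a' [h3 h4].
  exists (f c); split; last by exists c.
  exists a'; split => //.
  have := M3 _ _ h3; rewrite complK => h5; exact: (dv_5 hB h5).
Qed.

Lemma part7 (S : A -> B -> Prop) : DeVF_morphism precA precB S ->
  forall (a : A) (b : B), S_of precB (f_of S) a b <-> S a b.
Proof.
move=> hS; have hrel := fS_rel hS.
case: hS => [[[S10 S11] S2 S3 S4] hcA hcB F1 F2] a b; split.
  move=> [b' [h l]]; exact: (S4 _ _ _ _ l (hrel _ _ h) (lexx _)).
move=> hab; case: ((hcB a b).2 hab) => y [hay hyb].
by exists y; split => //; apply: (le_f_of (dv_c hA)).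
Qed.

Lemma part8 (f : A -> B) : DeV_morphism precA precB f ->
  forall a : A, f_of (S_of precA f) a = f a.
Proof.
case=> M1 M2 M3 M4 a; have cB := dv_c hB.
rewrite (M4 a); apply: (bigvee_eq cB).
  move=> x [a' [h l]]; apply: le_trans l _.
  by apply: (le_bigvee cB); exists a'.
move=> y [b0 [h ->]]; apply: (le_f_of cB); by exists b0.
Qed.
End Mor.

Section Comp.
Context {dA : Order.disp_t} {A : ctbDistrLatticeType dA} (precA : A -> A -> Prop)
        {dB : Order.disp_t} {B : ctbDistrLatticeType dB} (precB : B -> B -> Prop)
        {dC : Order.disp_t} {C : ctbDistrLatticeType dC} (precC : C -> C -> Prop)
        (hA : is_deVries precA) (hB : is_deVries precB) (hC : is_deVries precC).

Lemma part3 (S1 : A -> B -> Prop) (S2 : B -> C -> Prop) :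
  DeVF_morphism precA precB S1 -> DeVF_morphism precB precC S2 ->
  forall c : C, f_of (relcomp S1 S2) c = dev_comp precC (f_of S2) (f_of S1) c.
Proof.
move=> h1 h2 c; have hrel := fS_rel hB h2.
case: h1 => [[_ _ _ S14] _ _ _ _].
case: h2 => [_ _ hcB2 _ _].
have cA := dv_c hA; have cB := dv_c hB.
apply: (bigvee_eq cA).
  move=> x [b [hxb hbc]]; case: ((hcB2 b c).2 hbc) => c' [hbc' hc'c].
  apply: (@le_trans _ _ (f_of S1 (f_of S2 c'))).
    apply: (le_f_of cA); exact: (S14 _ _ _ _ (lexx x) hxb (le_f_of cB hbc')).
  by apply: (le_bigvee cA); exists c'.
move=> y [c' [hc'c ->]]; apply: (f_of_le cA) => x hx.
apply: (le_f_of cA); exists (f_of S2 c'); split => //; exact: hrel.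
Qed.

Lemma part6 (f : A -> B) (g : B -> C) :
  DeV_morphism precA precB f -> DeV_morphism precB precC g ->
  forall (c : C) (a : A),
    S_of precA (dev_comp precA f g) c a <-> relcomp (S_of precB g) (S_of precA f) c a.
Proof.
move=> hf hg c a; have fd := f_disj hf.
case: hf => M1 M2 M3 M4; case: hg => N1 N2 N3 N4.
have monof := mono_f M2; have monog := mono_f N2.
have cC := dv_c hC.
split.
  move=> [a' [h l]]; case: (dv_7 hA h) => a1 [h1 h2].
  exists (f a1); split; last by exists a1.
  exists (~` f (~` a')); split; first exact: (M3 _ _ h1).
  apply: le_trans l _; apply: (bigvee_le cC) => y [x [hx ->]].
  apply: monog; apply: le_trans (fd a'); apply: monof; exact: (dv_5 hA hx).
move=> [b [[b' [hb' l1]] [a'' [ha'' l2]]]].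
case: (dv_7 hA ha'') => a' [h1 h2].
exists a'; split => //.
apply: le_trans l1 _; apply: (@le_trans _ _ (g (f a''))).
  apply: monog; exact: le_trans (dv_5 hB hb') l2.
by apply: (le_bigvee cC); exists a''.
Qed.
End Comp.

Theorem theorem6p17
  (dA : Order.disp_t) (A : ctbDistrLatticeType dA) (precA : A -> A -> Prop)
  (dB : Order.disp_t) (B : ctbDistrLatticeType dB) (precB : B -> B -> Prop)
  (dC : Order.disp_t) (C : ctbDistrLatticeType dC) (precC : C -> C -> Prop)
  (hA : is_deVries precA) (hB : is_deVries precB) (hC : is_deVries precC) :
  (* the functor DeV^F -> DeV^op, S |-> f_S, is well defined *)
  (forall S : A -> B -> Prop, DeVF_morphism precA precB S ->
     DeV_morphism precB precA (f_of S)) /\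
  (forall a : A, f_of precA a = a) /\
  (forall (S1 : A -> B -> Prop) (S2 : B -> C -> Prop),
     DeVF_morphism precA precB S1 -> DeVF_morphism precB precC S2 ->
     forall c : C, f_of (relcomp S1 S2) c = dev_comp precC (f_of S2) (f_of S1) c) /\
  (* the functor DeV -> (DeV^F)^op, f |-> S_f, is well defined *)
  (forall f : A -> B, DeV_morphism precA precB f ->
     DeVF_morphism precB precA (S_of precA f)) /\
  (forall a a' : A, S_of precA id a a' <-> precA a a') /\
  (forall (f : A -> B) (g : B -> C),
     DeV_morphism precA precB f -> DeV_morphism precB precC g ->
     forall (c : C) (a : A),
       S_of precA (dev_comp precA f g) c a <-> relcomp (S_of precB g) (S_of precA f) c a) /\
  (* they are mutually inverse *)
  (forall S : A -> B -> Prop, DeVF_morphism precA precB S ->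
     forall (a : A) (b : B), S_of precB (f_of S) a b <-> S a b) /\
  (forall f : A -> B, DeV_morphism precA precB f ->
     forall a : A, f_of (S_of precA f) a = f a).
Proof.
split; first exact: (part1 hA hB).
split; first exact: (prec_sup hA).
split; first exact: (part3 hA hB).
split; first exact: (part4 hA hB).
split.
  move=> a a'; split.
    by move=> [x [hx l]]; exact: (dv_4 hA l hx (lexx _)).
  move=> h; case: (dv_7 hA h) => c [h1 h2]; exists c; split => //.
  exact: (dv_5 hA h1).
split; first exact: (part6 hA hB hC).
split; first by move=> S hS; exact: (part7 hA hS).
by move=> f hf; exact: (part8 hB hf).
Qed.
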